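(* Consider sequential first-price auctions in which all buyers have additive valuations. Then: (a) there is an absolute constant $c>0$ such that for every instance with $m$ items (any number of additive buyers, any selling-order function and any tie-breaking rule), the social welfare of every pure subgame perfect equilibrium is at least $c\cdot \mathrm{OPT}/m$, where $\mathrm{OPT}$ is the maximum possible social welfare; i.e., the price of anarchy is $O(m)$. (b) There is an absolute constant $c'>0$ such that for every $m$ there is an instance with exactly two additive buyers and $m$ identical items (every buyer has the same value for every item, so the selling order is irrelevant) whose price of anarchy is at least $c' m$. Hence the price of anarchy of sequential first-price auctions with additive buyers is $\Theta(m)$.
   Context: Setting (sequential first-price auctions): there is a set $M$ of $m$ items and a set $N$ of $n$ buyers. Buyer $i$ has a valuation $v_i:2^M\to\mathbb{R}_{\ge 0}$ with $v_i(\emptyset)=0$ and quasi-linear utility (value of the set of items obtained minus total payment). A buyer is additive if there are $v_{i,j}\ge 0$ with $v_i(S)=\sum_{j\in S}v_{i,j}$. Items are sold one at a time; each item is sold by a sealed-bid first-price auction without reserve price: every buyer submits a nonnegative bid, a highest bidder wins (ties broken by a tie-breaking rule fixed by the seller) and pays his bid. The seller fixes in advance a selling-order function choosing the next item as a function of the allocation of the items sold so far, together with the tie-breaking rule. There is full information (all valuations are common knowledge). A pure subgame perfect equilibrium (SPE) is a profile of pure strategies (a bid for each buyer at each node of the game tree) that is a Nash equilibrium in every subgame. The social welfare of an outcome is $\sum_i v_i(\text{bundle of } i)$. The price of anarchy of an instance is the ratio of the maximum social welfare over all allocations to the minimum social welfare of a pure SPE outcome. *)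

(* Defs.v *)
From HB Require Import structures.
From mathcomp Require Import all_boot all_order all_algebra.
From mathcomp Require Import Rstruct.

Set Implicit Arguments.
Unset Strict Implicit.
Unset Printing Implicit Defensive.

Import Order.TTheory GRing.Theory Num.Theory.
Local Open Scope ring_scope.

Notation RR := Rdefinitions.R.

Definition bids (n : nat) := {ffun 'I_n -> RR}.

(** Partial allocation of the items sold so far:
    [a j = Some i] iff item j was sold to buyer i; [None] = not yet sold. *)
Definition alloc (n m : nat) := {ffun 'I_m -> option 'I_n}.

Definition valid_order (n m : nat) (sigma : alloc n m -> 'I_m) : Prop :=
  forall a : alloc n m, (exists j, a j = None) -> a (sigma a) = None.

Definition valid_tb (n m : nat) (tb : alloc n m -> bids n -> 'I_n) : Prop :=
  forall (a : alloc n m) (b : bids n) (i : 'I_n), b i <= b (tb a b).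

Definition step (n m : nat) (sigma : alloc n m -> 'I_m)
  (tb : alloc n m -> bids n -> 'I_n)
  (st : alloc n m * {ffun 'I_n -> RR}) (b : bids n) :
  alloc n m * {ffun 'I_n -> RR} :=
  let: (a, p) := st in
  let j := sigma a in
  let w := tb a b in
  ([ffun k => if k == j then Some w else a k],
   [ffun k => if k == w then p k + b w else p k]).

Definition outcome (n m : nat) (sigma : alloc n m -> 'I_m)
  (tb : alloc n m -> bids n -> 'I_n) (h : seq (bids n)) :
  alloc n m * {ffun 'I_n -> RR} :=
  foldl (step sigma tb) ([ffun _ => None], [ffun _ => 0]) h.

(** A node of the game tree is a history of bid profiles (all bids >= 0).
    A pure strategy of a buyer gives a bid at each node. *)
Definition strategy (n : nat) := seq (bids n) -> RR.
Definition profile (n : nat) := 'I_n -> strategy n.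

Definition nonneg_strategy (n : nat) (d : strategy n) : Prop :=
  forall h, 0 <= d h.

Definition valid_hist (n : nat) (h : seq (bids n)) : bool :=
  all (fun b : bids n => [forall i, 0 <= b i]) h.

Definition bid_at (n : nat) (s : profile n) (h : seq (bids n)) : bids n :=
  [ffun i => s i h].

Definition play (n m : nat) (s : profile n) (h : seq (bids n)) : seq (bids n) :=
  iter (m - size h) (fun h' => rcons h' (bid_at s h')) h.

Definition deviate (n : nat) (s : profile n) (i : 'I_n) (d : strategy n) :
  profile n := fun k => if k == i then d else s k.

Definition value (n m : nat) (v : 'I_n -> 'I_m -> RR) (a : alloc n m)
  (i : 'I_n) : RR :=
  \sum_(j < m | a j == Some i) v i j.

Definition utility (n m : nat) (v : 'I_n -> 'I_m -> RR)
  (sigma : alloc n m -> 'I_m) (tb : alloc n m -> bids n -> 'I_n)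
  (h : seq (bids n)) (i : 'I_n) : RR :=
  value v (outcome sigma tb h).1 i - (outcome sigma tb h).2 i.

Definition is_SPE (n m : nat) (v : 'I_n -> 'I_m -> RR)
  (sigma : alloc n m -> 'I_m) (tb : alloc n m -> bids n -> 'I_n)
  (s : profile n) : Prop :=
  (forall i, nonneg_strategy (s i)) /\
  forall h : seq (bids n), valid_hist h -> (size h < m)%N ->
  forall (i : 'I_n) (d : strategy n), nonneg_strategy d ->
    utility v sigma tb (play m (deviate s i d) h) i
      <= utility v sigma tb (play m s h) i.

Definition welfare_alloc (n m : nat) (v : 'I_n -> 'I_m -> RR)
  (a : alloc n m) : RR :=
  \sum_i value v a i.

Definition spe_welfare (n m : nat) (v : 'I_n -> 'I_m -> RR)
  (sigma : alloc n m -> 'I_m) (tb : alloc n m -> bids n -> 'I_n)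
  (s : profile n) : RR :=
  welfare_alloc v (outcome sigma tb (play m s [::])).1.

Definition OPT (n m : nat) (v : 'I_n -> 'I_m -> RR) : RR :=
  \big[Num.max/0]_(f : {ffun 'I_m -> 'I_n}) \sum_(j < m) v (f j) j.

(* Main.v *)
Require Import Defs.
From HB Require Import structures.
From mathcomp Require Import all_boot all_order all_algebra.
From mathcomp Require Import Rstruct zify ring lra.
Import Order.TTheory GRing.Theory Num.Theory.
Local Open Scope ring_scope.
Set Implicit Arguments.
Unset Strict Implicit.
Unset Printing Implicit Defensive.

Section Frame.
Variables (n m : nat) (sigma : alloc n m -> 'I_m) (tb : alloc n m -> bids n -> 'I_n).
Hypothesis Hsig : valid_order sigma.

Notation A h := (outcome sigma tb h).1.
Notation P h := (outcome sigma tb h).2.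

Lemma outcome_rcons h b : outcome sigma tb (rcons h b) = step sigma tb (outcome sigma tb h) b.
Proof. by rewrite /outcome foldl_rcons. Qed.

Lemma A_rcons h b j : A (rcons h b) j =
  if j == sigma (A h) then Some (tb (A h) b) else A h j.
Proof. by rewrite outcome_rcons; case: (outcome _ _ h) => a p /=; rewrite ffunE. Qed.

Lemma P_rcons h b k : P (rcons h b) k =
  P h k + (if tb (A h) b == k then b k else 0).
Proof.
rewrite outcome_rcons; case: (outcome _ _ h) => a p /=; rewrite ffunE.
case: eqVneq => [->|Hne]; first by [].
idtac.
by rewrite addr0.
Qed.

Lemma count_sold h : (size h <= m)%N -> #|[set j | A h j != None]| = size h.
Proof.
elim/last_ind: h => [|h b IH].
  move=> _; rewrite /outcome /=; apply/eqP; rewrite cards_eq0; apply/eqP/setP => j.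
  by rewrite !inE ffunE.
rewrite size_rcons => Hs.
have IH' := IH (ltnW Hs).
have Hun : A h (sigma (A h)) = None.
  apply: Hsig; case: (pickP (fun j => A h j == None)) => [j /eqP Hj|Hall]; first by exists j.
  have : [set j | A h j != None] = setT.
    by apply/setP => j; rewrite !inE; move: (Hall j) => /= ->.
  move=> E; move: IH'; rewrite E cardsT card_ord => E2; rewrite E2 in Hs.
  by rewrite ltnn in Hs.
have -> : [set j | A (rcons h b) j != None] = sigma (A h) |: [set j | A h j != None].
  apply/setP => j; rewrite !inE A_rcons; case: (eqVneq j (sigma (A h))) => [->|_] //=.
by rewrite cardsU1 IH' inE Hun.
Qed.

Lemma unsold_sigma h : (size h < m)%N -> A h (sigma (A h)) = None.
Proof.
move=> Hs; apply: Hsig; case: (pickP (fun j => A h j == None)) => [j /eqP Hj|Hall]; first by exists j.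
have : [set j | A h j != None] = setT.
  by apply/setP => j; rewrite !inE; move: (Hall j) => /= ->.
move=> E; move: (count_sold (ltnW Hs)); rewrite E cardsT card_ord => E2.
by rewrite E2 ltnn in Hs.
Qed.

Lemma all_sold h j : size h = m -> A h j != None.
Proof.
move=> Hs; have := count_sold (eq_leq Hs); rewrite Hs => E.
have := cardsC [set j | A h j != None]; rewrite E cardT size_enum_ord => E2.
have : #|~: [set j | A h j != None]| = 0%N by lia.
move/cards0_eq/setP/(_ j); rewrite !inE; by case: (A h j).
Qed.

Lemma unsold_card h : (size h <= m)%N -> #|[set j | A h j == None]| = (m - size h)%N.
Proof.
move=> Hs; have -> : [set j | A h j == None] = ~: [set j | A h j != None].
  by apply/setP => j; rewrite !inE negbK.
have := cardsC [set j | A h j != None]; rewrite cardT size_enum_ord count_sold //; lia.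
Qed.

Variable v : 'I_n -> 'I_m -> RR.

Lemma value_upd (a : alloc n m) j w i : a j = None ->
  value v [ffun k => if k == j then Some w else a k] i =
  value v a i + (if w == i then v i j else 0).
Proof.
move=> Ha; rewrite /value !(big_mkcond (fun j0 => _ == _)) /=.
have -> : \sum_(j0 < m) (if [ffun k => if k == j then Some w else a k] j0 == Some i then v i j0 else 0)
  = \sum_(j0 < m) ((if a j0 == Some i then v i j0 else 0) + (if j0 == j then (if w == i then v i j else 0) else 0)).
  apply: eq_bigr => j0 _; rewrite ffunE; case: (eqVneq j0 j) => [->|_]; last by rewrite addr0.
  rewrite Ha /= add0r; case: (eqVneq w i) => [->|Hne]; first by rewrite eqxx.
  by case: eqP => // -[E]; rewrite E eqxx in Hne.
rewrite big_split /=; congr (_ + _).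
by rewrite -big_mkcond /= (big_pred1_eq _ j (fun _ => if w == i then v i j else 0)).
Qed.

Lemma value_rcons h b i : (size h < m)%N ->
  value v (A (rcons h b)) i = value v (A h) i +
   (if tb (A h) b == i then v i (sigma (A h)) else 0).
Proof.
move=> Hs.
have -> : A (rcons h b) = [ffun k => if k == sigma (A h) then Some (tb (A h) b) else A h k].
  by apply/ffunP => j; rewrite A_rcons ffunE.
by rewrite value_upd ?unsold_sigma.
Qed.

Lemma utility_rcons h b i : (size h < m)%N ->
  utility v sigma tb (rcons h b) i = utility v sigma tb h i +
   (if tb (A h) b == i then v i (sigma (A h)) - b i else 0).
Proof.
move=> Hs; rewrite /utility P_rcons.
have -> : A (rcons h b) = [ffun k => if k == sigma (A h) then Some (tb (A h) b) else A h k].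
  by apply/ffunP => j; rewrite A_rcons ffunE.
rewrite value_upd ?unsold_sigma //.
by case: ifP => _; rewrite ?addr0 ?subr0 //; lra.
Qed.

Lemma play_done (s : profile n) h : (m <= size h)%N -> play m s h = h.
Proof. by move=> Hs; rewrite /play (_ : m - size h = 0)%N //; lia. Qed.

Lemma play_step (s : profile n) h : (size h < m)%N ->
  play m s h = play m s (rcons h (bid_at s h)).
Proof.
move=> Hs; rewrite /play size_rcons (_ : (m - size h = (m - (size h).+1).+1)%N); last by lia.
by rewrite iterSr.
Qed.

Lemma play_ind (s : profile n) (Q : seq (bids n) -> seq (bids n) -> Prop) :
  (forall h, (m <= size h)%N -> Q h h) ->
  (forall h, (size h < m)%N -> Q (rcons h (bid_at s h)) (play m s (rcons h (bid_at s h))) ->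
     Q h (play m s (rcons h (bid_at s h)))) ->
  forall h, Q h (play m s h).
Proof.
move=> Hb Hst h; move Er : (m - size h)%N => r; elim: r h Er => [|r IH] h Er.
  have Hm : (m <= size h)%N by lia.
  by rewrite play_done //; apply: Hb.
have Hs : (size h < m)%N by lia.
rewrite play_step //; apply: Hst => //; apply: IH; rewrite size_rcons; lia.
Qed.

Lemma size_play (s : profile n) h : (size h <= m)%N -> size (play m s h) = m.
Proof.
move: h; apply: (play_ind (Q := fun h x => (size h <= m)%N -> size x = m)).
  by move=> h H1 H2; apply/eqP; rewrite eqn_leq H1 H2 //.
by move=> h Hs IH _; apply: IH; rewrite size_rcons.
Qed.

Lemma play_stable (s : profile n) h j k : A h j = Some k -> A (play m s h) j = Some k.
Proof.
move: h; apply: (play_ind (Q := fun h x => A h j = Some k -> A x j = Some k)) => // h Hs IH Ha.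
apply: IH; rewrite A_rcons; case: eqP => // E; move: Ha; by rewrite E unsold_sigma.
Qed.

Lemma play_pay (s : profile n) h k : (forall i h', 0 <= s i h') -> P h k <= P (play m s h) k.
Proof.
move=> Hnn; move: h; apply: (play_ind (Q := fun h x => P h k <= P x k)) => // h Hs IH.
apply: le_trans IH; rewrite P_rcons lerDl; case: ifP => // _; by rewrite ffunE.
Qed.

Hypothesis Hv : forall i j, 0 <= v i j.

Lemma play_zero (s : profile n) i h0 : (forall h'', (size h0 <= size h'')%N -> s i h'' = 0) ->
  utility v sigma tb h0 i <= utility v sigma tb (play m s h0) i.
Proof.
move=> Hz.
suff H : forall h, (size h0 <= size h)%N ->
  utility v sigma tb h i <= utility v sigma tb (play m s h) i by exact: H.
apply: (play_ind (Q := fun h x => (size h0 <= size h)%N ->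
  utility v sigma tb h i <= utility v sigma tb x i)) => // h Hs IH Hh.
apply: le_trans (IH _); last by rewrite size_rcons; lia.
rewrite utility_rcons // lerDl; case: ifP => // _; rewrite ffunE Hz // subr0; exact: Hv.
Qed.

End Frame.

Ltac clean_eqs := repeat match goal with H : @eq ?T _ _ |- _ => tryif unify T RR then fail else clear H end.
Ltac lra' := clean_eqs; lra.

Lemma sum_if1 (T : finType) (i : T) (F : T -> RR) :
  \sum_k (if k == i then F k else 0) = F i.
Proof. by rewrite -big_mkcond /= (big_pred1_eq _ i F). Qed.

Lemma value_ge0 n m (v : 'I_n -> 'I_m -> RR) a i : (forall i j, 0 <= v i j) -> 0 <= value v a i.
Proof. by move=> Hv; apply: sumr_ge0 => j _; apply: Hv. Qed.

Lemma welfare_ge0 n m (v : 'I_n -> 'I_m -> RR) a : (forall i j, 0 <= v i j) -> 0 <= welfare_alloc v a.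
Proof. by move=> Hv; apply: sumr_ge0 => i _; apply: value_ge0. Qed.

Lemma welfare_ge n m (v : 'I_n -> 'I_m -> RR) (a : alloc n m) i j :
  (forall i j, 0 <= v i j) -> a j = Some i -> v i j <= welfare_alloc v a.
Proof.
move=> Hv Ha; rewrite /welfare_alloc (bigD1 i) //=.
have H2 : 0 <= \sum_(k < n | k != i) value v a k by apply: sumr_ge0 => k _; apply: value_ge0.
suff : v i j <= value v a i by lra.
rewrite /value (bigD1 j) /=; last by rewrite Ha.
have : 0 <= \sum_(k < m | (a k == Some i) && (k != j)) v i k by apply: sumr_ge0 => k _; apply: Hv.
lra.
Qed.

Section PartA.
Variables (n m : nat) (v : 'I_n -> 'I_m -> RR)
  (sigma : alloc n m -> 'I_m) (tb : alloc n m -> bids n -> 'I_n) (s : profile n).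
Hypothesis Hv : forall i j, 0 <= v i j.
Hypothesis Hsig : valid_order sigma.
Hypothesis Htb : valid_tb tb.
Hypothesis Hspe : is_SPE v sigma tb s.

Notation A h := (outcome sigma tb h).1.
Notation P h := (outcome sigma tb h).2.
Notation U h i := (utility v sigma tb h i).

Lemma snn i h : 0 <= s i h.
Proof. by case: Hspe => H _; apply: H. Qed.

Lemma U0 h k : valid_hist h -> (size h < m)%N -> U h k <= U (play m s h) k.
Proof.
move=> Hval Hs; case: Hspe => _ /(_ h Hval Hs k (fun _ => 0) (fun _ => lexx 0)) H.
apply: le_trans H; apply: play_zero => // h'' _; by rewrite /deviate eqxx.
Qed.

Variables (istar : 'I_n) (jstar : 'I_m).
Local Notation vs := (v istar jstar).
Hypothesis Hvs : 0 < vs.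

Lemma Dev h : valid_hist h -> (size h < m)%N -> sigma (A h) = jstar ->
  U h istar + vs / 2 - bid_at s h (tb (A h) (bid_at s h)) <= U (play m s h) istar.
Proof.
move=> Hval Hs Hj; have Hvs0 := Hvs.
set B := bid_at s h; set w := tb (A h) B.
pose d : strategy n := fun h'' => if h'' == h then B w + vs / 2 else 0.
have Hd : nonneg_strategy d.
  move=> h''; rewrite /d; case: ifP => // _; rewrite /B ffunE.
  have := snn w h; lra.
case: Hspe => _ /(_ h Hval Hs istar d Hd) H; apply: le_trans H.
set s' := deviate s istar d.
rewrite (play_step s' Hs).
set B' := bid_at s' h.
have Hz : forall h'', (size (rcons h B') <= size h'')%N -> s' istar h'' = 0.
  move=> h''; rewrite size_rcons /s' /deviate eqxx /d => Hh; case: eqP => // E.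
  by rewrite E ltnn in Hh.
apply: le_trans (play_zero tb Hsig Hv Hz).
rewrite utility_rcons //.
have HB'i : B' istar = B w + vs / 2 by rewrite /B' ffunE /s' /deviate eqxx /d eqxx.
have HB'k : forall k, k != istar -> B' k = B k.
  by move=> k Hk; rewrite /B' /B !ffunE /s' /deviate (negbTE Hk).
have -> : tb (A h) B' = istar.
  apply/eqP/negPn/negP => Ht.
  have H1 := Htb (A h) B' istar; rewrite HB'i HB'k // in H1.
  have H2 := Htb (A h) B (tb (A h) B').
  lra'.
rewrite eqxx Hj HB'i ; lra'.
Qed.

Lemma partA_node :
  forall h, valid_hist h -> (size h <= m)%N -> A h jstar = None ->
    vs / 2 <= welfare_alloc v (A (play m s h)).
Proof.
apply: (play_ind (Q := fun h x => valid_hist h -> (size h <= m)%N -> A h jstar = None ->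
    vs / 2 <= welfare_alloc v (A x))).
  move=> h H1 _ H2 H3; have Hsz : size h = m by apply/eqP; rewrite eqn_leq H1 H2.
  by have := all_sold tb Hsig jstar Hsz; rewrite H3.
move=> h Hs IH Hval _ Hnone; have Hvs0 := Hvs.
set B := bid_at s h.
have HvalB : valid_hist (rcons h B).
  rewrite /valid_hist all_rcons; apply/andP; split => //.
  by apply/forallP => i; rewrite /B ffunE snn.
case: (eqVneq (sigma (A h)) jstar) => Hj; last first.
  apply: IH => //; first by rewrite size_rcons.
  by rewrite A_rcons eq_sym (negbTE Hj).
set w := tb (A h) B.
have Hx : A (rcons h B) jstar = Some w by rewrite A_rcons Hj eqxx.
case: (eqVneq w istar) => Hw.
  apply: le_trans (welfare_ge Hv (play_stable Hsig s Hx)).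
  rewrite Hw ; lra.
set x := play m s (rcons h B).
have Hux : forall k, U h k + (if k == istar then vs / 2 - B w else 0) <= U x k.
  move=> k; case: (eqVneq k istar) => [->|Hk].
    have := Dev Hval Hs Hj; rewrite (play_step _ Hs) -/B -/w -/x; lra.
  rewrite addr0 /x -(play_step _ Hs); exact: U0.
have Hpx : forall k, P h k + (if k == w then B w else 0) <= P x k.
  move=> k; apply: (le_trans _ (play_pay sigma tb _ _ snn)).
  rewrite P_rcons -/w eq_sym; case: eqP => [->|] //.
have -> : welfare_alloc v (A x) = \sum_k (U x k + P x k).
  by apply: eq_bigr => k _; rewrite /utility subrK.
apply: (le_trans _ (ler_sum _ (fun k _ => lerD (Hux k) (Hpx k)))).
have E1 : \sum_k (if k == istar then vs / 2 - B w else 0) = vs / 2 - B w.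
  exact: (sum_if1 istar (fun _ => vs / 2 - B w)).
have E2 : \sum_k (if k == w then B w else 0) = B w.
  exact: (sum_if1 w (fun _ => B w)).
rewrite !big_split /= sumrN E1 E2.
have : 0 <= \sum_k value v (A h) k by apply: sumr_ge0 => k _; exact: value_ge0.
lra'.
Qed.

End PartA.

Lemma partA n m (v : 'I_n -> 'I_m -> RR) (sigma : alloc n m -> 'I_m)
  (tb : alloc n m -> bids n -> 'I_n) :
  (forall i j, 0 <= v i j) -> valid_order sigma -> valid_tb tb ->
  forall s : profile n, is_SPE v sigma tb s ->
  2^-1 * OPT v / m%:R <= spe_welfare v sigma tb s.
Proof.
move=> Hv Hsig Htb s Hspe.
have HW : 0 <= spe_welfare v sigma tb s by apply: welfare_ge0.
case: (posnP m) => [Em|Hm].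
  have -> : m%:R = 0 :> RR by rewrite Em.
  by rewrite invr0 mulr0.
have Hmr : 0 < m%:R :> RR by rewrite ltr0n.
rewrite ler_pdivrMr //.
set W := spe_welfare v sigma tb s.
have HWm : 0 <= W * m%:R by rewrite mulr_ge0 // ltW.
case: (posnP n) => [En|Hn].
  have : OPT v <= 0.
    rewrite /OPT; apply: bigmax_le => // f _.
    case: (f (Ordinal Hm)) => k Hk.
    by have : (k < 0)%N by rewrite -En.
  lra'.
pose p0 : 'I_n * 'I_m := (Ordinal Hn, Ordinal Hm).
have [[istar jstar] _ HM] := @eq_bigmax _ _ _ 0 p0 predT (fun p => v p.1 p.2) is_true_true
   (fun p _ => Hv p.1 p.2).
set M := \big[Num.max/0]_(p | predT p) v p.1 p.2 in HM.
have HvM : forall i j, v i j <= M.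
  by move=> i j; rewrite /M; exact: (@le_bigmax_cond _ _ _ 0 (i, j) predT (fun p => v p.1 p.2) is_true_true).
have HM0 : 0 <= M by rewrite HM Hv.
have HOPT : OPT v <= m%:R * M.
  rewrite /OPT; apply: bigmax_le => [|f _]; first by rewrite mulr_ge0.
  apply: le_trans (ler_sum _ (fun j _ => HvM (f j) j)) _.
  by rewrite sumr_const card_ord mulr_natl.
case: (eqVneq M 0) => HM0'.
  have : m%:R * M = 0 by rewrite HM0' mulr0.
  lra'.
have Hvs : 0 < v istar jstar by rewrite /= -HM lt0r HM0' HM0.
have := partA_node Hv Hsig Htb Hspe Hvs (h := [::]) is_true_true (leq0n _).
rewrite {1}/outcome /= ffunE -HM => /(_ erefl) HW2.
have HW3 : M / 2 <= W by exact: HW2.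
have : m%:R * M <= m%:R * (2 * W).
  apply: ler_wpM2l; [exact: ltW | lra'].
move: HOPT; clearbody W; clear -HW3 HWm HM0; lra.
Qed.

Section PartB.
Variables (m : nat) (j0 : 'I_m).

Definition b0 : 'I_2 := ord0.
Definition b1 : 'I_2 := ord_max.

Lemma I2 (k : 'I_2) : k = b0 \/ k = b1.
Proof.
case: k => [[|[|k]] Hk]; [left|right|by []]; exact: val_inj.
Qed.

Lemma b10 : (b1 == b0) = false. Proof. by []. Qed.
Lemma b01 : (b0 == b1) = false. Proof. by []. Qed.

Definition vB (i : 'I_2) (j : 'I_m) : RR := if i == b0 then 1 else 0.
Definition sigmaB (a : alloc 2 m) : 'I_m := odflt j0 [pick j | a j == None].
Definition coop (a : alloc 2 m) : bool := [forall j, a j != Some b0].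
Definition unsold2 (a : alloc 2 m) : bool := (2 <= #|[set j | a j == None]|)%N.
Definition tbB (a : alloc 2 m) (b : bids 2) : 'I_2 :=
  if (b b0 < b b1) || ((b b0 == b b1) && coop a && unsold2 a) then b1 else b0.
Definition sB : profile 2 := fun k h => if coop (outcome sigmaB tbB h).1 then 0 else 1.

Lemma sigmaB_valid : valid_order sigmaB.
Proof.
move=> a [j Hj]; rewrite /sigmaB; case: pickP => [j' /eqP //|H].
by have := H j; rewrite Hj eqxx.
Qed.

Lemma tbB_valid : valid_tb tbB.
Proof.
move=> a b i; rewrite /tbB.
case: ifP => [/orP[/ltW|/andP[/andP[/eqP E _] _]]|/negbT].
- by case: (I2 i) => -> //.
- by case: (I2 i) => ->; rewrite ?E.
- by rewrite negb_or -leNgt => /andP[H _]; case: (I2 i) => ->.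
Qed.

Notation A h := (outcome sigmaB tbB h).1.
Notation U h i := (utility vB sigmaB tbB h i).

Lemma coop_rcons h b : (size h < m)%N ->
  coop (A (rcons h b)) = coop (A h) && (tbB (A h) b != b0).
Proof.
move=> Hs; have Hun := unsold_sigma tbB sigmaB_valid Hs.
apply/idP/idP.
  move=> /forallP H; apply/andP; split.
    apply/forallP => j; have := H j; rewrite A_rcons.
    by case: (eqVneq j (sigmaB (A h))) => [->|] //; rewrite Hun.
  by have := H (sigmaB (A h)); rewrite A_rcons eqxx.
move=> /andP[/forallP H Hw]; apply/forallP => j; rewrite A_rcons.
by case: (eqVneq j (sigmaB (A h))) => _ //; rewrite (inj_eq Some_inj).
Qed.

Lemma unsold2E h : (size h <= m)%N -> unsold2 (A h) = (size h + 2 <= m)%N.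
Proof.
move=> Hs; rewrite /unsold2 (unsold_card tbB sigmaB_valid Hs).
apply/idP/idP => H; lia.
Qed.

Definition Phi h := U h b0 + (if coop (A h) && (size h < m)%N then 1 else 0).

Lemma UB0 h b : (size h < m)%N ->
  U (rcons h b) b0 = U h b0 + (if tbB (A h) b == b0 then 1 - b b0 else 0).
Proof. by move=> Hs; rewrite (utility_rcons tbB sigmaB_valid) // /vB eqxx. Qed.

Lemma UB1 h b : (size h < m)%N ->
  U (rcons h b) b1 = U h b1 + (if tbB (A h) b == b1 then - b b1 else 0).
Proof. by move=> Hs; rewrite (utility_rcons tbB sigmaB_valid) // /vB b10 sub0r. Qed.

Lemma step0 h (b : bids 2) : (size h < m)%N -> 0 <= b b0 -> b b1 = sB b1 h ->
  Phi (rcons h b) <= Phi h.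
Proof.
move=> Hs Hb0 Hb1; rewrite /Phi UB0 // coop_rcons // size_rcons Hs andbT.
have Htb := tbB_valid (A h) b.
case: (I2 (tbB (A h) b)) => Ew; rewrite Ew ?eqxx ?b10 ?b01 /=.
  rewrite andbF addr0; case: ifP => Hc.
    lra.
  have := Htb b1; rewrite Ew Hb1 /sB Hc => H; lra.
case: (coop (A h)) => /=; [case: ifP => _; lra | lra].
Qed.

Lemma step0eq h : (size h < m)%N -> Phi (rcons h (bid_at sB h)) = Phi h.
Proof.
move=> Hs; rewrite /Phi UB0 // coop_rcons // size_rcons Hs andbT.
have E0 : bid_at sB h b0 = if coop (A h) then 0 else 1 by rewrite ffunE.
have E1 : bid_at sB h b1 = if coop (A h) then 0 else 1 by rewrite ffunE.
have Etb : tbB (A h) (bid_at sB h) = if coop (A h) && unsold2 (A h) then b1 else b0.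
  rewrite /tbB E0 E1 ltxx eqxx /=; by case: ifP.
rewrite Etb unsold2E; last by apply: ltnW.
have Hs1 : ((size h).+1 < m)%N = (size h + 2 <= m)%N by apply/idP/idP; lia.
rewrite Hs1 E0.
case Hc: (coop (A h)); case H2: (size h + 2 <= m)%N; rewrite /= ?eqxx ?b10 ?b01 /=; lra.
Qed.

Lemma dev0 (s' : profile 2) : (forall h, s' b1 h = sB b1 h) -> (forall h, 0 <= s' b0 h) ->
  forall h, U (play m s' h) b0 <= Phi h.
Proof.
move=> H1 H0.
apply: (play_ind (Q := fun h x => U x b0 <= Phi h)).
  move=> h Hm; rewrite /Phi; have -> : (size h < m)%N = false by apply/negbTE; rewrite -leqNgt.
  by rewrite andbF addr0.
move=> h Hs IH; apply: le_trans IH _; apply: step0 => //; rewrite ffunE //.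
Qed.

Lemma eq0 h : U (play m sB h) b0 = Phi h.
Proof.
move: h; apply: (play_ind (Q := fun h x => U x b0 = Phi h)).
  move=> h Hm; rewrite /Phi; have -> : (size h < m)%N = false by apply/negbTE; rewrite -leqNgt.
  by rewrite andbF addr0.
by move=> h Hs ->; apply: step0eq.
Qed.

Lemma dev1 (s' : profile 2) : (forall k h, 0 <= s' k h) ->
  forall h, U (play m s' h) b1 <= U h b1.
Proof.
move=> H0; apply: (play_ind (Q := fun h x => U x b1 <= U h b1)) => // h Hs IH.
apply: le_trans IH _; rewrite UB1 //; case: ifP => _; last by rewrite addr0.
rewrite ffunE; have := H0 b1 h; lra.
Qed.

Lemma eq1 h : U (play m sB h) b1 = U h b1.
Proof.
move: h; apply: (play_ind (Q := fun h x => U x b1 = U h b1)) => // h Hs ->.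
rewrite UB1 //; case: ifP => Hw; last by rewrite addr0.
rewrite ffunE /sB; case: ifP => Hc; first by rewrite oppr0 addr0.
by move: Hw; rewrite /tbB !ffunE /sB Hc ltxx /= andbF andFb.
Qed.

Lemma sB_nn k h : 0 <= sB k h.
Proof. by rewrite /sB; case: ifP. Qed.

Lemma sB_SPE : is_SPE vB sigmaB tbB sB.
Proof.
split; first by move=> i h; apply: sB_nn.
move=> h _ Hs i d Hd.
case: (I2 i) => ->.
  rewrite eq0; apply: dev0 => h'; rewrite /deviate ?b10 ?eqxx //.
move: (dev1 (s' := deviate sB b1 d)) => H; rewrite eq1; apply: H => k h'.
rewrite /deviate; case: ifP => _; [exact: Hd | exact: sB_nn].
Qed.

Lemma coop_value a : coop a -> value vB a b0 = 0.
Proof.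
move=> /forallP H; rewrite /value big_mkcond big1 // => j _.
by rewrite (negbTE (H j)).
Qed.

Lemma value1 a : value vB a b1 = 0.
Proof. by rewrite /value big1 // => j _; rewrite /vB b10. Qed.

Lemma val_path h : coop (A h) -> value vB (A (play m sB h)) b0 = if (size h < m)%N then 1 else 0.
Proof.
move: h; apply: (play_ind (Q := fun h x => coop (A h) -> value vB (A x) b0 = if (size h < m)%N then 1 else 0)).
  move=> h Hm Hc; rewrite coop_value //; have -> : (size h < m)%N = false by apply/negbTE; rewrite -leqNgt.
  by [].
move=> h Hs IH Hc; rewrite Hs.
have E0 : bid_at sB h b0 = 0 by rewrite ffunE /sB Hc.
have E1 : bid_at sB h b1 = 0 by rewrite ffunE /sB Hc.
have Etb : tbB (A h) (bid_at sB h) = if unsold2 (A h) then b1 else b0.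
  by rewrite /tbB E0 E1 ltxx eqxx Hc.
case H2 : (unsold2 (A h)).
  rewrite IH; first by rewrite size_rcons; move: H2; rewrite unsold2E ?(ltnW Hs) // => H2; case: ifP => //; lia.
  by rewrite coop_rcons // Hc Etb H2.
rewrite play_done; last by move: H2; rewrite unsold2E ?(ltnW Hs) // size_rcons; lia.
rewrite (value_rcons tbB sigmaB_valid) // Etb H2 eqxx coop_value // /vB eqxx; lra.
Qed.

Lemma welfareB : spe_welfare vB sigmaB tbB sB = 1.
Proof.
rewrite /spe_welfare /welfare_alloc.
have Hc : coop (A [::]) by apply/forallP => j; rewrite /outcome /= ffunE.
have Hm : (0 < m)%N by case: j0 => k Hk; lia.
rewrite -(sum_if1 b0 (fun _ => 1)); apply: eq_bigr => k _.
case: (I2 k) => ->; first by rewrite eqxx val_path // Hm.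
by rewrite b10 value1.
Qed.

Lemma OPTB : m%:R <= OPT vB.
Proof.
have := @le_bigmax_cond _ _ _ 0 [ffun _ => b0] predT
   (fun f : {ffun 'I_m -> 'I_2} => \sum_(j < m) vB (f j) j) is_true_true.
rewrite /OPT; apply: le_trans.
rewrite (eq_bigr (fun _ => 1)); last by move=> j _; rewrite ffunE /vB eqxx.
by rewrite sumr_const card_ord.
Qed.

End PartB.

Theorem mainTheorem1 :
  (exists c : RR, 0 < c /\
    forall (n m : nat) (v : 'I_n -> 'I_m -> RR)
      (sigma : alloc n m -> 'I_m) (tb : alloc n m -> bids n -> 'I_n),
      (forall i j, 0 <= v i j) -> valid_order sigma -> valid_tb tb ->
      forall s : profile n, is_SPE v sigma tb s ->
        c * OPT v / m%:R <= spe_welfare v sigma tb s)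
  /\
  (exists c' : RR, 0 < c' /\
    forall m : nat, (0 < m)%N ->
      exists (v : 'I_2 -> 'I_m -> RR) (sigma : alloc 2 m -> 'I_m)
             (tb : alloc 2 m -> bids 2 -> 'I_2),
        [/\ (forall i j, 0 <= v i j),
            (forall i j j', v i j = v i j'),
            valid_order sigma, valid_tb tb & 0 < OPT v] /\
        exists s : profile 2, is_SPE v sigma tb s /\
          c' * m%:R * spe_welfare v sigma tb s <= OPT v).
Proof.
split.
  exists (2^-1); split; first by rewrite invr_gt0 ltr0n.
  move=> n m v sigma tb Hv Hsig Htb s Hspe; exact: partA.
exists 1; split; first exact: ltr01.
move=> m Hm; pose j0 := Ordinal Hm.
exists (@vB m), (@sigmaB m j0), (@tbB m); split.
  split.
  - by move=> i j; rewrite /vB; case: ifP.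
  - by [].
  - exact: sigmaB_valid.
  - exact: tbB_valid.
  - have H1 := OPTB m; have H2 : (0:RR) < m%:R by rewrite ltr0n.
    exact: (lt_le_trans H2 H1).
exists (@sB m j0); split; first exact: sB_SPE.
by rewrite (welfareB j0) mul1r mulr1; exact: (OPTB m).
Qed.
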